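(* Let $\mathcal{R}\subseteq\mathbb{R}^{\mathcal{S}\times\mathcal{A}}$ be a nonempty compact, not necessarily $s$-rectangular, reward uncertainty set, and let $C(\mathcal{R})=\bigcap\{\mathcal{R}^{\texttt{s}} : \mathcal{R}^{\texttt{s}} \text{ is } s\text{-rectangular and } \mathcal{R}\subseteq\mathcal{R}^{\texttt{s}}\}$ be the smallest $s$-rectangular set containing $\mathcal{R}$. Then for every stationary policy $\pi\in\Pi$, the robust value function $v^\pi_{C(\mathcal{R})}$ is a fixed point of the robust Bellman evaluation operator $\mathcal{T}^\pi_{\mathcal{R}}$, and the optimal robust value function $v^*_{C(\mathcal{R})}$ is a fixed point of the robust Bellman optimality operator $\mathcal{T}^*_{\mathcal{R}}$.
   Context: Finite MDP: finite state space $\mathcal{S}$, finite action space $\mathcal{A}$, transition kernel $P(\cdot|s,a)\in\Delta_{\mathcal{S}}$, discount factor $\gamma\in[0,1)$. $\Pi$ is the set of stationary randomized policies $\pi:\mathcal{S}\to\Delta_{\mathcal{A}}$, written $\pi_s(a)=\pi(a|s)$. For a reward $R\in\mathbb{R}^{\mathcal{S}\times\mathcal{A}}$ let $R^\pi(s)=\sum_a\pi_s(a)R(s,a)$, $P^\pi(s'|s)=\sum_a\pi_s(a)P(s'|s,a)$, $v^\pi_R=(I-\gamma P^\pi)^{-1}R^\pi$ and $(\mathcal{T}^\pi_R v)(s)=R^\pi(s)+\gamma\sum_{s'}P^\pi(s'|s)v(s')$. A set $\mathcal{R}'\subseteq\mathbb{R}^{\mathcal{S}\times\mathcal{A}}$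 is $s$-rectangular if $\mathcal{R}'=\times_{s\in\mathcal{S}}\mathcal{R}'_s$ with $\mathcal{R}'_s\subseteq\mathbb{R}^{\mathcal{A}}$ (i.e. the rows $R(s,\cdot)$ can be chosen independently across states). Robust Bellman evaluation operator: $(\mathcal{T}^\pi_{\mathcal{R}}v)(s)=\min_{R\in\mathcal{R}}(\mathcal{T}^\pi_R v)(s)$ for each $s$; robust Bellman optimality operator: $(\mathcal{T}^*_{\mathcal{R}}v)(s)=\max_{\pi\in\Pi}(\mathcal{T}^\pi_{\mathcal{R}}v)(s)$. For a compact $s$-rectangular set $\mathcal{R}'$, the robust value function is $v^\pi_{\mathcal{R}'}(s)=\min_{R\in\mathcal{R}'}v^\pi_R(s)$ and the optimal robust value function is $v^*_{\mathcal{R}'}(s)=\max_{\pi\in\Pi}v^\pi_{\mathcal{R}'}(s)$. *)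

(* Defs.v *)
From HB Require Import structures.
From mathcomp Require Import all_boot all_order all_algebra.
From mathcomp Require Import all_classical all_reals all_analysis.
Set Implicit Arguments. Unset Strict Implicit. Unset Printing Implicit Defensive.
Import Order.TTheory GRing.Theory Num.Theory.
Import numFieldNormedType.Exports.
Local Open Scope classical_set_scope.
Local Open Scope ring_scope.

(* States are 'I_n, actions are 'I_m.  A reward is a matrix R : 'M[R]_(n,m)
   with R s a = R(s,a); this type carries its canonical (normed) topology. *)

Section MDP.
Variables (R : realType) (n m : nat).

(* transition trans_kernel P s a s' = P(s'|s,a) *)
Definition trans_kernel := 'I_n -> 'I_m -> 'I_n -> R.
Definition is_trans_kernel (P : trans_kernel) : Prop :=
  forall s a, (forall s', 0 <= P s a s') /\ \sum_(s' < n) P s a s' = 1.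

(* stationary randomized policies pi s a = pi(a|s) *)
Definition policy := 'I_n -> 'I_m -> R.
Definition Policies : set policy :=
  [set pi | forall s, (forall a, 0 <= pi s a) /\ \sum_(a < m) pi s a = 1].

Definition Rpi (pi : policy) (Rw : 'M[R]_(n, m)) : 'cV[R]_n :=
  \col_s \sum_(a < m) pi s a * Rw s a.
Definition Ppi (P : trans_kernel) (pi : policy) : 'M[R]_n :=
  \matrix_(s, s') \sum_(a < m) pi s a * P s a s'.

Definition vpi (P : trans_kernel) (gamma : R) (pi : policy) (Rw : 'M[R]_(n, m))
  : 'I_n -> R :=
  fun s => (invmx (1%:M - gamma *: Ppi P pi) *m Rpi pi Rw) s ord0.

Definition Tpi (P : trans_kernel) (gamma : R) (pi : policy) (Rw : 'M[R]_(n, m))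
  (v : 'I_n -> R) : 'I_n -> R :=
  fun s => Rpi pi Rw s ord0 + gamma * \sum_(s' < n) Ppi P pi s s' * v s'.

Definition s_rectangular (X : set 'M[R]_(n, m)) : Prop :=
  exists Xs : 'I_n -> set 'rV[R]_m,
    X = [set Rw | forall s, Xs s (row s Rw)].

Definition rect_hull (X : set 'M[R]_(n, m)) : set 'M[R]_(n, m) :=
  \bigcap_(Y in [set Y | s_rectangular Y /\ X `<=` Y]) Y.

(* robust Bellman evaluation operator (min over R in X, i.e. the infimum,
   which is attained for compact X) *)
Definition robust_T (P : trans_kernel) (gamma : R) (X : set 'M[R]_(n, m))
  (pi : policy) (v : 'I_n -> R) : 'I_n -> R :=
  fun s => inf [set Tpi P gamma pi Rw v s | Rw in X].

Definition robust_Topt (P : trans_kernel) (gamma : R) (X : set 'M[R]_(n, m))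
  (v : 'I_n -> R) : 'I_n -> R :=
  fun s => sup [set robust_T P gamma X pi v s | pi in Policies].

Definition robust_v (P : trans_kernel) (gamma : R) (X : set 'M[R]_(n, m))
  (pi : policy) : 'I_n -> R :=
  fun s => inf [set vpi P gamma pi Rw s | Rw in X].

Definition robust_vopt (P : trans_kernel) (gamma : R) (X : set 'M[R]_(n, m))
  : 'I_n -> R :=
  fun s => sup [set robust_v P gamma X pi s | pi in Policies].

End MDP.

(* Main.v *)
Require Import Defs.
From HB Require Import structures.
From mathcomp Require Import all_boot all_order all_algebra.
From mathcomp Require Import all_classical all_reals all_analysis.
From mathcomp Require Import ring lra.
Import Order.TTheory GRing.Theory Num.Theory.
Import numFieldNormedType.Exports.
Local Open Scope classical_set_scope.
Local Open Scope ring_scope.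

Set Implicit Arguments. Unset Strict Implicit.
Section Aux.
Variables (R : realType) (n : nat).

Lemma minp (Q : 'M[R]_n) g c (x : 'I_n -> R) : 0 <= g -> g < 1 ->
  (forall i j, 0 <= Q i j) -> (forall i, \sum_j Q i j = 1) ->
  (forall i, c + g * \sum_j Q i j * x j <= x i) -> forall i, c / (1 - g) <= x i.
Proof.
move=> g0 g1 Q0 Q1 H i.
case: (@arg_minP _ _ _ i predT (fun j => x j) isT) => k _ Hk.
have h1 : c + g * x k <= x k.
  apply: le_trans (H k); rewrite lerD2l; apply: ler_wpM2l => //.
  rewrite -[leLHS]mul1r -(Q1 k) mulr_suml; apply: ler_sum => j _.
  by apply: ler_wpM2l; [apply: Q0 | apply: Hk].
apply: le_trans (Hk i isT).
rewrite ler_pdivrMr ?subr_gt0 //.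
by rewrite mulrBr mulr1 lerBrDr [x k * g]mulrC.
Qed.

Lemma maxp (Q : 'M[R]_n) g c (x : 'I_n -> R) : 0 <= g -> g < 1 ->
  (forall i j, 0 <= Q i j) -> (forall i, \sum_j Q i j = 1) ->
  (forall i, x i <= c + g * \sum_j Q i j * x j) -> forall i, x i <= c / (1 - g).
Proof.
move=> g0 g1 Q0 Q1 H i.
have := @minp Q g (- c) (fun j => - x j) g0 g1 Q0 Q1.
move=> h; have := h _ i; rewrite mulNr lerN2; apply; move=> j.
rewrite -lerN2 opprK opprD opprK -mulrN -sumrN.
under eq_bigr do rewrite mulrN opprK.
exact: H.
Qed.

Lemma inf_char (S : set R) a : (forall y, S y -> a <= y) ->
  (forall e, 0 < e -> exists2 y, S y & y <= a + e) -> inf S = a.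
Proof.
move=> lb ap.
have [y0 Sy0 _] := ap 1 ltr01.
apply/eqP; rewrite eq_le; apply/andP; split; last first.
  by apply: lb_le_inf; [exists y0 | move=> y /lb].
apply/ler_addgt0Pr => e e0.
have [y Sy yz] := ap e e0.
apply: le_trans yz.
by apply: ge_inf => //; exists a => w /lb.
Qed.
Lemma sup_char (S : set R) a : (forall y, S y -> y <= a) ->
  (forall e, 0 < e -> exists2 y, S y & a - e <= y) -> sup S = a.
Proof.
move=> ub ap.
have [y0 Sy0 _] := ap 1 ltr01.
apply/eqP; rewrite eq_le; apply/andP; split.
  by apply: ge_sup; [exists y0 | move=> y /ub].
apply/ler_addgt0Pr => e e0.
have [y Sy yz] := ap e e0.
rewrite -lerBlDr; apply: le_trans yz _.
by apply: ub_le_sup => //; exists a => w /ub.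
Qed.

Lemma cmp_lo (Q : 'M[R]_n) g c (x y f h : 'I_n -> R) : 0 <= g -> g < 1 ->
  (forall i j, 0 <= Q i j) -> (forall i, \sum_j Q i j = 1) ->
  (forall i, x i = f i + g * \sum_j Q i j * x j) ->
  (forall i, y i = h i + g * \sum_j Q i j * y j) ->
  (forall i, c <= f i - h i) -> forall i, c / (1 - g) <= x i - y i.
Proof.
move=> g0 g1 Q0 Q1 hx hy hc; apply: minp => // i.
have -> : x i - y i = (f i - h i) + g * \sum_j Q i j * (x j - y j).
  rewrite {1}(hx i) {1}(hy i).
  under [X in _ = _ + g * X]eq_bigr do rewrite mulrBr.
  rewrite sumrB; ring.
by rewrite lerD2r.
Qed.

Lemma cmp_hi (Q : 'M[R]_n) g c (x y f h : 'I_n -> R) : 0 <= g -> g < 1 ->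
  (forall i j, 0 <= Q i j) -> (forall i, \sum_j Q i j = 1) ->
  (forall i, x i = f i + g * \sum_j Q i j * x j) ->
  (forall i, y i = h i + g * \sum_j Q i j * y j) ->
  (forall i, f i - h i <= c) -> forall i, x i - y i <= c / (1 - g).
Proof.
move=> g0 g1 Q0 Q1 hx hy hc; apply: maxp => // i.
have -> : x i - y i = (f i - h i) + g * \sum_j Q i j * (x j - y j).
  rewrite {1}(hx i) {1}(hy i).
  under [X in _ = _ + g * X]eq_bigr do rewrite mulrBr.
  rewrite sumrB; ring.
by rewrite lerD2r.
Qed.
End Aux.

Lemma eq_le_ (R : realType) (a b : R) : a = b -> a <= b.
Proof. by move=> ->. Qed.

Section MDP.
Variables (R : realType) (n m : nat) (P : trans_kernel R n m) (gamma : R).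
Variables (X : set 'M[R]_(n, m)) (B : R).
Hypotheses (hP : is_trans_kernel P) (g0 : 0 <= gamma) (g1 : gamma < 1).
Hypotheses (Xne : X !=set0) (hB : forall Rw, X Rw -> forall s a, `|Rw s a| <= B).

Local Notation Pol := (@Policies R n m).

Lemma Q_ge0 pi : Pol pi -> forall i j, 0 <= Ppi P pi i j.
Proof.
move=> hp i j; rewrite mxE; apply: sumr_ge0 => a _; apply: mulr_ge0.
  exact: (hp i).1.
exact: (hP i a).1.
Qed.

Lemma Q_sum1 pi : Pol pi -> forall i, \sum_j Ppi P pi i j = 1.
Proof.
move=> hp i; under eq_bigr do rewrite mxE.
rewrite exchange_big /= -(hp i).2; apply: eq_bigr => a _.
by rewrite -mulr_sumr (hP i a).2 mulr1.
Qed.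

Lemma unitA pi : Pol pi -> (1%:M - gamma *: Ppi P pi) \in unitmx.
Proof.
move=> hp; rewrite -unitmx_tr -row_free_unit; apply: inj_row_free => v hv.
have h2 : (1%:M - gamma *: Ppi P pi) *m v^T = 0.
  by rewrite -[LHS]trmxK trmx_mul trmxK hv trmx0.
rewrite mulmxBl mul1mx -scalemxAl in h2.
have hw : forall i, v^T i ord0 = 0 + gamma * \sum_j Ppi P pi i j * v^T j ord0.
  move=> i; have := congr1 (fun M : 'M[R]_(n,1) => M i ord0) h2.
  rewrite !mxE.
  by move/eqP; rewrite subr_eq0 add0r => /eqP.
have hlo := minp g0 g1 (Q_ge0 hp) (Q_sum1 hp) (fun i => eq_le_ (esym (hw i))).
have hhi := maxp g0 g1 (Q_ge0 hp) (Q_sum1 hp) (fun i => eq_le_ (hw i)).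
apply/matrixP => i j; rewrite (ord1 i) [RHS]mxE.
have := hlo j; have := hhi j; rewrite mul0r mxE => a b.
by apply/eqP; rewrite eq_le a b.
Qed.


Lemma sol_eq pi (f : 'cV[R]_n) : Pol pi -> forall i,
  (invmx (1%:M - gamma *: Ppi P pi) *m f) i ord0 = f i ord0 +
  gamma * \sum_j Ppi P pi i j * (invmx (1%:M - gamma *: Ppi P pi) *m f) j ord0.
Proof.
move=> hp i.
set x := invmx _ *m f.
have h : (1%:M - gamma *: Ppi P pi) *m x = f by rewrite /x mulKVmx // unitA.
rewrite mulmxBl mul1mx -scalemxAl in h.
have := congr1 (fun M : 'M[R]_(n,1) => M i ord0) h; rewrite !mxE => <-.
by rewrite subrK.
Qed.

Definition rr pi s := inf [set Rpi pi Rw s ord0 | Rw in X].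

Lemma Rpi_lb pi Rw s : Pol pi -> X Rw -> - B <= Rpi pi Rw s ord0.
Proof.
move=> hp hR; rewrite mxE.
have -> : - B = \sum_a pi s a * (- B) by rewrite -mulr_suml (hp s).2 mul1r.
apply: ler_sum => a _; apply: ler_wpM2l; first exact: (hp s).1.
by have := hB hR s a; rewrite ler_norml => /andP[].
Qed.

Lemma Rpi_ub pi Rw s : Pol pi -> X Rw -> Rpi pi Rw s ord0 <= B.
Proof.
move=> hp hR; rewrite mxE.
have -> : B = \sum_a pi s a * B by rewrite -mulr_suml (hp s).2 mul1r.
apply: ler_sum => a _; apply: ler_wpM2l; first exact: (hp s).1.
by have := hB hR s a; rewrite ler_norml => /andP[].
Qed.

Lemma has_inf_R pi s : Pol pi -> has_inf [set Rpi pi Rw s ord0 | Rw in X].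
Proof.
move=> hp; split.
  by case: Xne => Rw hR; exists (Rpi pi Rw s ord0); exists Rw.
by exists (- B) => y [Rw hR <-]; exact: Rpi_lb.
Qed.

Lemma rr_le pi s Rw : Pol pi -> X Rw -> rr pi s <= Rpi pi Rw s ord0.
Proof.
move=> hp hR; apply: ge_inf; first exact: (has_inf_R s hp).2.
by exists Rw.
Qed.

Lemma rr_adh pi s e : Pol pi -> 0 < e ->
  exists2 Rw, X Rw & Rpi pi Rw s ord0 < rr pi s + e.
Proof.
move=> hp e0; have [y [Rw hR <-] h] := inf_adherent e0 (has_inf_R s hp).
by exists Rw.
Qed.

Lemma rr_bounds pi s : Pol pi -> - B <= rr pi s /\ rr pi s <= B.
Proof.
move=> hp; split.
  by apply: lb_le_inf; [exact: (has_inf_R s hp).1 | move=> y [Rw hR <-]; exact: Rpi_lb].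
case: Xne => Rw hR; apply: le_trans (rr_le s hp hR) _; exact: Rpi_ub.
Qed.

Lemma robust_T_eq pi v s : Pol pi ->
  robust_T P gamma X pi v s = rr pi s + gamma * \sum_j Ppi P pi s j * v j.
Proof.
move=> hp; apply: inf_char.
  by move=> y [Rw hR <-]; rewrite /Tpi lerD2r; exact: rr_le.
move=> e e0; have [Rw hR hlt] := rr_adh s hp e0.
exists (Tpi P gamma pi Rw v s); first by exists Rw.
rewrite /Tpi -addrA (addrC (gamma * _) e) addrA lerD2r; exact: ltW.
Qed.

Definition xs pi := invmx (1%:M - gamma *: Ppi P pi) *m \col_i rr pi i.

Lemma xs_eq pi : Pol pi -> forall i,
  xs pi i ord0 = rr pi i + gamma * \sum_j Ppi P pi i j * xs pi j ord0.
Proof. by move=> hp i; rewrite /xs sol_eq // mxE. Qed.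


Lemma in_hull Rw s : rect_hull X Rw -> exists2 Rw', X Rw' & row s Rw = row s Rw'.
Proof.
move=> hC.
pose Y := [set M : 'M[R]_(n, m) | forall s, [set row s M' | M' in X] (row s M)].
have hY : Y Rw.
  apply: hC; split; first by exists (fun s => [set row s M' | M' in X]).
  by move=> M hM s'; exists M.
by have [Rw' hR e] := hY s; exists Rw'.
Qed.

Lemma hull_of (F : 'I_n -> 'M[R]_(n, m)) : (forall s, X (F s)) ->
  rect_hull X (\matrix_(i, a) F i i a).
Proof.
move=> hF Y [[Xs ->] hXY] s /=.
have := hXY _ (hF s) s.
by congr (Xs s); apply/rowP => a; rewrite !mxE.
Qed.

Lemma Rpi_row_eq (pi : policy R n m) Rw Rw' s : row s Rw = row s Rw' ->
  Rpi pi Rw s ord0 = Rpi pi Rw' s ord0.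
Proof.
move=> e; rewrite !mxE; apply: eq_bigr => a _; congr (_ * _).
by have := congr1 (fun M : 'rV[R]_m => M ord0 a) e; rewrite !mxE.
Qed.

Lemma rv_eq pi : Pol pi ->
  robust_v P gamma (rect_hull X) pi = fun s => xs pi s ord0.
Proof.
move=> hp; apply/funext => s; apply: inf_char.
  move=> y [Rw hC <-].
  have := @cmp_lo _ _ (Ppi P pi) gamma 0 (fun j => vpi P gamma pi Rw j)
    (fun j => xs pi j ord0) (fun j => Rpi pi Rw j ord0) (fun j => rr pi j)
    g0 g1 (Q_ge0 hp) (Q_sum1 hp) (fun i => sol_eq _ hp i) (xs_eq hp).
  move=> h; have := h _ s; rewrite mul0r subr_ge0; apply => i.
  have [Rw' hR e] := in_hull i hC.
  by rewrite subr_ge0 (Rpi_row_eq _ e); exact: rr_le.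
move=> e e0.
have e'0 : 0 < e * (1 - gamma) by rewrite mulr_gt0 // subr_gt0.
have /choice [F hF] : forall s' : 'I_n, exists Rw' : 'M[R]_(n, m), X Rw' /\ Rpi pi Rw' s' ord0 < rr pi s' + e * (1 - gamma).
  by move=> s'; have [Rw' hR hlt] := rr_adh s' hp e'0; exists Rw'.
pose Rw := \matrix_(i, a) F i i a.
exists (vpi P gamma pi Rw s); first by exists Rw => //; apply: hull_of => s'; exact: (hF s').1.
have := @cmp_hi _ _ (Ppi P pi) gamma (e * (1 - gamma)) (fun j => vpi P gamma pi Rw j)
    (fun j => xs pi j ord0) (fun j => Rpi pi Rw j ord0) (fun j => rr pi j)
    g0 g1 (Q_ge0 hp) (Q_sum1 hp) (fun i => sol_eq _ hp i) (xs_eq hp).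
rewrite mulfK ?subr_eq0 ?gt_eqF // => h.
rewrite -lerBlDl; apply: h => i.
have -> : Rpi pi Rw i ord0 = Rpi pi (F i) i ord0.
  by apply: Rpi_row_eq; apply/rowP => a; rewrite !mxE.
by rewrite lerBlDl addrC; apply: ltW; rewrite addrC; exact: (hF i).2.
Qed.


Lemma xs_bounds pi s : Pol pi -> - (B / (1 - gamma)) <= xs pi s ord0 /\ xs pi s ord0 <= B / (1 - gamma).
Proof.
move=> hp; split.
  rewrite -mulNr; apply: (@minp _ _ (Ppi P pi) gamma (- B) (fun j => xs pi j ord0) g0 g1 (Q_ge0 hp) (Q_sum1 hp)) => i.
  by rewrite [leRHS](xs_eq hp) lerD2r; exact: (rr_bounds i hp).1.
apply: (@maxp _ _ (Ppi P pi) gamma B (fun j => xs pi j ord0) g0 g1 (Q_ge0 hp) (Q_sum1 hp)) => i.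
by rewrite [leLHS](xs_eq hp) lerD2r; exact: (rr_bounds i hp).2.
Qed.

Definition W s := sup [set xs pi s ord0 | pi in Pol].

Variables (pi0 : policy R n m) (hp0 : Pol pi0).

Lemma has_sup_W s : has_sup [set xs pi s ord0 | pi in Pol].
Proof.
split; first by exists (xs pi0 s ord0); exists pi0.
by exists (B / (1 - gamma)) => y [pi hp <-]; exact: (xs_bounds s hp).2.
Qed.

Lemma xs_le_W pi s : Pol pi -> xs pi s ord0 <= W s.
Proof. by move=> hp; apply: ub_le_sup; [exact: (has_sup_W s).2 | exists pi]. Qed.

Lemma W_adh s e : 0 < e -> exists2 pi, Pol pi & W s - e < xs pi s ord0.
Proof.
move=> e0; have [y [pi hp <-] h] := sup_adherent e0 (has_sup_W s).
by exists pi.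
Qed.

Definition g pi s := rr pi s + gamma * \sum_j Ppi P pi s j * W j.

Lemma g_ge_xs pi s : Pol pi -> xs pi s ord0 <= g pi s.
Proof.
move=> hp; rewrite (xs_eq hp) /g lerD2l; apply: ler_wpM2l => //.
apply: ler_sum => j _; apply: ler_wpM2l; [exact: Q_ge0 | exact: xs_le_W].
Qed.

Lemma g_row (pi pi' : policy R n m) s : pi s = pi' s -> g pi s = g pi' s.
Proof.
move=> h.
have e1 : rr pi s = rr pi' s.
  by rewrite /rr; congr inf; apply: eq_imagel => Rw _; rewrite !mxE h.
have e2 : forall j, Ppi P pi s j = Ppi P pi' s j by move=> j; rewrite !mxE h.
by rewrite /g e1; congr (_ + gamma * _); apply: eq_bigr => j _; rewrite e2.
Qed.

Lemma g_le_W pi s0 : Pol pi -> g pi s0 <= W s0.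
Proof.
move=> hp; apply/ler_addgt0Pr => d d0.
case: (lerP (g pi s0) (W s0)) => [h|hgt].
  by apply: le_trans h _; rewrite lerDl; exact: ltW.
have e0 : 0 < d * (1 - gamma) by rewrite mulr_gt0 // subr_gt0.
have /choice [F hF] : forall s : 'I_n, exists pi' : policy R n m, Pol pi' /\ W s - d * (1 - gamma) <= g pi' s.
  move=> s; have [pi' hp' hlt] := W_adh s e0.
  by exists pi'; split => //; apply: le_trans (ltW hlt) (g_ge_xs s hp').
pose sig := fun s => if s == s0 then pi s else F s s.
have hsig : Pol sig.
  by move=> s; rewrite /sig; case: eqP => _; [exact: hp s | exact: (hF s).1 s].
have gsig : forall s, W s - d * (1 - gamma) <= g sig s.
  move=> s; case: (eqVneq s s0) => [->|ne].
    rewrite (@g_row sig pi); last by rewrite /sig eqxx.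
    apply: le_trans (ltW hgt); rewrite lerBlDr lerDl; exact: ltW.
  by rewrite (@g_row sig (F s)); [exact: (hF s).2 | rewrite /sig (negbTE ne)].
have hc := @cmp_lo _ _ (Ppi P sig) gamma (- (d * (1 - gamma))) (fun j => xs sig j ord0)
    W (fun j => rr sig j) (fun j => W j - gamma * \sum_k Ppi P sig j k * W k)
    g0 g1 (Q_ge0 hsig) (Q_sum1 hsig) (xs_eq hsig).
have {hc} hc : forall i, - d <= xs sig i ord0 - W i.
  move=> i; have := hc _ _ i.
  rewrite mulNr mulfK ?subr_eq0 ?gt_eqF //; apply.
    by move=> j /=; rewrite subrK.
  by move=> j; have := gsig j; rewrite /g; set t := d * _; set u := gamma * _; lra.
have hs0 : xs sig s0 ord0 - W s0 = (g sig s0 - W s0) + gamma * \sum_k Ppi P sig s0 k * (xs sig k ord0 - W k).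
  rewrite {1}(xs_eq hsig) /g.
  under [X in _ = _ + gamma * X]eq_bigr do rewrite mulrBr.
  rewrite sumrB; ring.
have hle : xs sig s0 ord0 - W s0 <= 0 by rewrite subr_le0; exact: xs_le_W.
have hsum : - d <= \sum_k Ppi P sig s0 k * (xs sig k ord0 - W k).
  have -> : - d = \sum_k Ppi P sig s0 k * (- d) by rewrite -mulr_suml Q_sum1 // mul1r.
  by apply: ler_sum => k _; apply: ler_wpM2l; [exact: Q_ge0 | exact: hc].
have hgs : g sig s0 = g pi s0 by apply: g_row; rewrite /sig eqxx.
have hgd : gamma * (- d) <= gamma * \sum_k Ppi P sig s0 k * (xs sig k ord0 - W k).
  exact: ler_wpM2l.
have hgd2 : gamma * d <= d by rewrite -[leRHS]mul1r ler_wpM2r // ltW.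
rewrite hgs in hs0.
lra.
Qed.

End MDP.

Lemma entry_le_norm (R : realType) (n m : nat) (M : 'M[R]_(n, m)) i j :
  `|M i j| <= `|M|.
Proof.
by rewrite [leRHS]/Num.Def.normr /= mx_normrE; apply/bigmax_geP; right => /=; exists (i, j).
Qed.

Lemma compact_entry_bound (R : realType) (n m : nat) (X : set 'M[R]_(n, m)) :
  compact X -> exists B, forall Rw, X Rw -> forall s a, `|Rw s a| <= B.
Proof.
move=> /compact_bounded [M [Mreal HM]].
exists (M + 1) => Rw hR s a.
apply: le_trans (entry_le_norm Rw s a) _.
by apply: (HM (M + 1)) => //; rewrite ltrDl.
Qed.

Unset Implicit Arguments.

Theorem proposition1 (R : realType) (n m : nat) (P : trans_kernel R n m)
  (gamma : R) (X : set 'M[R]_(n, m)) :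
  is_trans_kernel P -> 0 <= gamma -> gamma < 1 ->
  X !=set0 -> compact X ->
  (forall pi, Policies pi ->
     robust_T P gamma X pi (robust_v P gamma (rect_hull X) pi)
     = robust_v P gamma (rect_hull X) pi) /\
  robust_Topt P gamma X (robust_vopt P gamma (rect_hull X))
  = robust_vopt P gamma (rect_hull X).
Proof.
move=> hP g0 g1 Xne cX.
have [B hB] := compact_entry_bound cX.
split.
  move=> pi hp; rewrite (rv_eq hP g0 g1 Xne hB hp); apply/funext => s.
  by rewrite (robust_T_eq P gamma Xne hB) // -(xs_eq X hP g0 g1 hp).
have [[pi0 hp0]|Pne] := pselect ((@Policies R n m) !=set0); last first.
  have e : @Policies R n m = set0.
    by apply/seteqP; split => // pi hp; exfalso; apply: Pne; exists pi.
  by apply/funext => s; rewrite /robust_Topt /robust_vopt e !image_set0.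
have hV : robust_vopt P gamma (rect_hull X) = W P gamma X.
  apply/funext => s; rewrite /robust_vopt /W; congr sup.
  by apply: eq_imagel => pi hp; rewrite (rv_eq hP g0 g1 Xne hB hp).
rewrite hV; apply/funext => s; apply: sup_char.
  move=> y [pi hp <-]; rewrite (robust_T_eq P gamma Xne hB) //.
  exact: (g_le_W hP g0 g1 Xne hB hp0).
move=> e e0; have [pi hp hlt] := W_adh hP g0 g1 Xne hB hp0 s e0.
exists (robust_T P gamma X pi (W P gamma X) s); first by exists pi.
rewrite (robust_T_eq P gamma Xne hB) //; apply: le_trans (ltW hlt) _.
exact: (g_ge_xs hP g0 g1 Xne hB hp0).
Qed.
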